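(* Under the setting described in the context (conditions (V), (S), (C), compactly supported initial measure $\mu_0$, lattice approximate solution $\mu^N_t$), there is a compact set $K_V\subseteq\mathbb{R}^d\times\mathbb{R}^d$, independent of $l$ and $N$, such that $\operatorname{supp}V[\mu^N_{t_l}]\subseteq K_V$ for all $l$ and all (sufficiently large) $N$.
   Context: $\mathcal{M}^+(\mathbb{R}^k)$: finite nonnegative Borel measures; $\|f\|_{BL}=\max(\sup|f|,\operatorname{Lip}f)$, $\|\mu\|_{BL^*}=\sup\{\int\psi\,d\mu:\|\psi\|_{BL}\le1\}$. Conditions: (V) $V:\mathcal{M}^+(\mathbb{R}^d)\to\mathcal{M}^+(\mathbb{R}^d\times\mathbb{R}^d)$, $\pi_1^{\#}V[\mu]=\mu$; (V1) $\sup_{(x,v)\in\operatorname{supp}V[\mu]}|v|\le C_S(1+\sup_{(x,v)\in\operatorname{supp}V[\mu]}|x|)$; (V2) for each $R'>0$, $\|V[\mu]-V[\nu]\|_{BL^*}\le C_F(R')\|\mu-\nu\|_{BL^*}$ for $\mu,\nu$ supported in $B(0,R')$. (S) $s:\mathcal{M}^+(\mathbb{R}^d)\to\mathcal{M}^+(\mathbb{R}^d)$, (S1) $\|s[\mu]-s[\nu]\|_{BL^*}\le L\|\mu-\nu\|_{BL^*}$, (S2) $\operatorname{supp}s[\mu]\subseteq B(0,R)$ for all $\mu$. (C) $c:\mathbb{R}^d\times\mathcal{M}^+(\mathbb{R}^d)\to\mathbb{R}$, (C1) $|c|\le C_b$, (C2) $|c(x,\mu)-c(y,\nu)|\le C_L(|x-y|+\|\mu-\nu\|_{BL^*})$.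 Lattice scheme: fix $T>0$; $\Delta_N=1/N$; $x_1,\dots,x_I$ enumerate $(N^{-2}\mathbb{Z}^d)\cap[-N,N]^d$, $v_1,\dots,v_J$ enumerate $(N^{-1}\mathbb{Z}^d)\cap[-N,N]^d$; $Q_i=x_i+[0,\Delta_N^2)^d$, $Q'_j=v_j+[0,\Delta_N)^d$; $m_i^x(\mu)=\mu(Q_i)$, $m_{ij}^v(W)=W(Q_i\times Q'_j)$. Time points $t_l=l/N$, $l=0,\dots,M$, with the intervals $[t_l,t_{l+1})$ ($l<M$) and $[t_M,T]$ covering $[0,T]$, each of length at most $\Delta_N$. Set $\mu^N_0=\sum_i m_i^x(\mu_0)\delta_{x_i}$ and for $\tau\in[0,\Delta_N]$: $\mu^N_{t_l+\tau}=\tau\sum_i m_i^x(s[\mu^N_{t_l}])\delta_{x_i}+\sum_{i,j}m_{ij}^v(V[\mu^N_{t_l}])e^{c(x_i,\mu^N_{t_l})\tau}\delta_{x_i+\tau v_j}$. *)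

(* Defs.v *)
From HB Require Import structures.
From mathcomp Require Import all_boot all_order all_algebra.
From mathcomp Require Import all_classical all_reals all_analysis.
Set Implicit Arguments. Unset Strict Implicit. Unset Printing Implicit Defensive.
Import Order.TTheory GRing.Theory Num.Theory.
Import numFieldNormedType.Exports.
Local Open Scope classical_set_scope.
Local Open Scope ring_scope.

Notation Borel X := (g_sigma_algebraType (@open X)).

Notation Mplus R X := {finite_measure set (Borel X) -> \bar R}.

Definition enorm (R : realType) (d : nat) (x : 'rV[R]_d) : R :=
  Num.sqrt (\sum_(i < d) x ord0 i ^+ 2).

Definition dist1 (R : realType) (d : nat) (x y : 'rV[R]_d) : R := enorm (x - y).
Definition dist2 (R : realType) (d : nat) (p q : 'rV[R]_d * 'rV[R]_d) : R :=
  Num.sqrt (enorm (p.1 - q.1) ^+ 2 + enorm (p.2 - q.2) ^+ 2).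

Definition eball0 (R : realType) (d : nat) (r : R) : set 'rV[R]_d :=
  [set x | enorm x < r].

(* Test functions with ||psi||_BL = max(sup|psi|, Lip psi) <= 1 w.r.t. dist. *)
Definition BL1 (R : realType) (X : Type) (dist : X -> X -> R) (psi : X -> R) : Prop :=
  (forall x, `|psi x| <= 1) /\ (forall x y, `|psi x - psi y| <= dist x y).

Definition bl_dist (R : realType) (dd : measure_display) (T : measurableType dd)
  (dist : T -> T -> R) (mu nu : {finite_measure set T -> \bar R}) : \bar R :=
  ereal_sup [set (\int[mu]_x (psi x)%:E - \int[nu]_x (psi x)%:E)%E | psi in BL1 dist].

Definition msupp (R : realType) (dd : measure_display) (T : measurableType dd)
  (op : set (set T)) (mu : {finite_measure set T -> \bar R}) : set T :=
  [set x | forall U : set T, op U -> U x -> (0 < mu U)%E].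

Definition bl1 (R : realType) (d : nat) (mu nu : Mplus R 'rV[R]_d) : \bar R :=
  @bl_dist R _ (Borel 'rV[R]_d) (@dist1 R d) mu nu.
Definition bl2 (R : realType) (d : nat) (mu nu : Mplus R ('rV[R]_d * 'rV[R]_d)%type) : \bar R :=
  @bl_dist R _ (Borel ('rV[R]_d * 'rV[R]_d)%type) (@dist2 R d) mu nu.
Definition supp1 (R : realType) (d : nat) (mu : Mplus R 'rV[R]_d) : set 'rV[R]_d :=
  @msupp R _ (Borel 'rV[R]_d) (@open 'rV[R]_d) mu.
Definition supp2 (R : realType) (d : nat) (mu : Mplus R ('rV[R]_d * 'rV[R]_d)%type)
  : set ('rV[R]_d * 'rV[R]_d)%type :=
  @msupp R _ (Borel ('rV[R]_d * 'rV[R]_d)%type) (@open ('rV[R]_d * 'rV[R]_d)%type) mu.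

(* Lattice points x_k in (N^{-2} Z^d) cap [-N,N]^d, indexed by k : 'I_d -> {0..2N^3}. *)
Definition xpt (R : realType) (d N : nat) (k : {ffun 'I_d -> 'I_(2 * N ^ 3).+1}) : 'rV[R]_d :=
  \row_j (((k j)%:R - (N ^ 3)%:R) / (N ^ 2)%:R).

(* Velocity lattice points v_k in (N^{-1} Z^d) cap [-N,N]^d, k : 'I_d -> {0..2N^2}. *)
Definition vpt (R : realType) (d N : nat) (k : {ffun 'I_d -> 'I_(2 * N ^ 2).+1}) : 'rV[R]_d :=
  \row_j (((k j)%:R - (N ^ 2)%:R) / N%:R).

Definition hcube (R : realType) (d : nat) (z : 'rV[R]_d) (h : R) : set 'rV[R]_d :=
  [set y | forall j : 'I_d, z ord0 j <= y ord0 j < z ord0 j + h].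

Definition mx (R : realType) (d N : nat) (mu : Mplus R 'rV[R]_d)
  (k : {ffun 'I_d -> 'I_(2 * N ^ 3).+1}) : R :=
  fine (mu (hcube (xpt R k) (1 / (N ^ 2)%:R))).

Definition mv (R : realType) (d N : nat) (W : Mplus R ('rV[R]_d * 'rV[R]_d)%type)
  (k : {ffun 'I_d -> 'I_(2 * N ^ 3).+1}) (k' : {ffun 'I_d -> 'I_(2 * N ^ 2).+1}) : R :=
  fine (W (hcube (xpt R k) (1 / (N ^ 2)%:R) `*` hcube (vpt R k') (1 / N%:R))).

(* mu : nat -> M^+ is the lattice approximate solution at the time points t_l = l/N:
   mu l = mu^N_{t_l}.  Measures are specified by their values on Borel sets;
   delta_z(A) = \1_A z. *)
Definition lattice_scheme (R : realType) (d : nat)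
  (V : Mplus R 'rV[R]_d -> Mplus R ('rV[R]_d * 'rV[R]_d)%type)
  (s : Mplus R 'rV[R]_d -> Mplus R 'rV[R]_d)
  (c : 'rV[R]_d -> Mplus R 'rV[R]_d -> R)
  (mu0 : Mplus R 'rV[R]_d) (N : nat) (mu : nat -> Mplus R 'rV[R]_d) : Prop :=
  (forall A : set (Borel 'rV[R]_d), measurable A ->
     mu 0%N A = (\sum_(k : {ffun 'I_d -> 'I_(2 * N ^ 3).+1}) mx mu0 k * \1_A (xpt R k))%:E) /\
  (forall (l : nat) (A : set (Borel 'rV[R]_d)), measurable A ->
     mu l.+1 A =
       ((1 / N%:R) * (\sum_(k : {ffun 'I_d -> 'I_(2 * N ^ 3).+1}) mx (s (mu l)) k * \1_A (xpt R k))
        + \sum_(k : {ffun 'I_d -> 'I_(2 * N ^ 3).+1})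
            \sum_(k' : {ffun 'I_d -> 'I_(2 * N ^ 2).+1}) (mv (V (mu l)) k k' * expR (c (xpt R k) (mu l) * (1 / N%:R))
                          * \1_A (xpt R k + (1 / N%:R) *: vpt R k')))%:E).

(* Main.v *)
Require Import Defs.
From HB Require Import structures.
From mathcomp Require Import all_boot all_order all_algebra.
From mathcomp Require Import all_classical all_reals all_analysis.
From mathcomp Require Import lra ring.
Import Order.TTheory GRing.Theory Num.Theory.
Import numFieldNormedType.Exports.
Local Open Scope classical_set_scope.
Local Open Scope ring_scope.

Lemma open_meas (X : ptopologicalType) (U : set X) : open U ->
  measurable (U : set (Borel X)).
Proof. by move=> oU; apply: sub_sigma_algebra. Qed.

Lemma null_cover (R : realType) (X : ptopologicalType) (m : Mplus R X)
  (B Q : set X) : compact B -> Q `<=` B -> measurable (Q : set (Borel X)) ->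
  (forall x, B x -> ~ @msupp R _ (Borel X) (@open X) m x) -> m Q = 0%E.
Proof.
move=> cB QB mQ Hn.
have H : forall x : X, exists U : set X, [/\ open U, m U = 0%E & (B x -> U x)].
  move=> x; have [Bx|nBx] := pselect (B x); last first.
    by exists set0; split => //; exact: open0.
  have := Hn x Bx; rewrite /msupp /= => /existsNP [U] /not_implyP [oU] /not_implyP [Ux nlt].
  exists U; split => // [].
  apply/eqP; rewrite eq_le measure_ge0 andbT.
  by rewrite leNgt; apply/negP => h; apply: nlt.
have [U HU] := choice H.
move: cB; rewrite compact_cover => /(_ X B U).
case.
- by move=> i _; case: (HU i).
- by move=> x Bx; exists x => //; case: (HU x) => _ _; apply.
move=> D' _ cov.
apply/eqP; rewrite eq_le measure_ge0 andbT.
have h := @content_sub_fsum _ _ _ m X _ Q U (finite_fset D').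
rewrite (le_trans (h _ mQ _)) //.
- by move=> i _; apply: open_meas; case: (HU i).
- by move=> x /QB /cov.
rewrite fsbig1 // => i _; by case: (HU i).
Qed.

Lemma coord_le_norm (R : realType) d (y : 'rV[R]_d) j : `|y ord0 j| <= `|y|.
Proof.
rewrite [leRHS]/Num.norm /= mx_normrE; apply/bigmax_geP; right => /=.
by exists (ord0, j).
Qed.

Lemma fst_cont (X Y : topologicalType) : continuous (@fst X Y).
Proof. move=> p; exact: cvg_fst. Qed.
Lemma snd_cont (X Y : topologicalType) : continuous (@snd X Y).
Proof. move=> p; exact: cvg_snd. Qed.

Lemma meas_lt (R : realType) (X : ptopologicalType) (f : X -> R) (c : R) :
  continuous f -> measurable ([set x | f x < c] : set (Borel X)).
Proof.
move=> cf; apply: open_meas.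
have -> : [set x | f x < c] = f @^-1` [set y | y < c] by [].
by move/continuousP : cf; apply; exact: open_lt.
Qed.

Lemma meas_ge (R : realType) (X : ptopologicalType) (f : X -> R) (c : R) :
  continuous f -> measurable ([set x | c <= f x] : set (Borel X)).
Proof.
move=> cf.
have -> : [set x | c <= f x] = ~` [set x | f x < c].
  apply/seteqP; split => x /=; first by rewrite leNgt => /negP.
  by move/negP; rewrite -leNgt.
by apply: measurableC; exact: meas_lt.
Qed.

Lemma coord1_cont (R : realType) d (j : 'I_d) :
  continuous (fun p : ('rV[R]_d * 'rV[R]_d)%type => p.1 ord0 j).
Proof. move=> p; apply: (@continuous_comp _ _ _ fst (fun M : 'rV[R]_d => M ord0 j)); [exact: fst_cont | exact: coord_continuous]. Qed.
Lemma coord2_cont (R : realType) d (j : 'I_d) :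
  continuous (fun p : ('rV[R]_d * 'rV[R]_d)%type => p.2 ord0 j).
Proof. move=> p; apply: (@continuous_comp _ _ _ snd (fun M : 'rV[R]_d => M ord0 j)); [exact: snd_cont | exact: coord_continuous]. Qed.

Lemma meas_hcube (R : realType) d (z : 'rV[R]_d) h :
  measurable (hcube z h : set (Borel 'rV[R]_d)).
Proof.
have -> : hcube z h = \bigcap_(j in [set: 'I_d])
   ([set y : 'rV[R]_d | z ord0 j <= y ord0 j] `&` [set y : 'rV[R]_d | y ord0 j < z ord0 j + h]).
  apply/seteqP; split => y /=.
    by move=> H j _; have /andP[] := H j; split.
  by move=> H j; have [-> ->] := H j I.
apply: fin_bigcap_measurable; first exact: finite_finset.
move=> j _; apply: measurableI; [apply: meas_ge | apply: meas_lt]; exact: coord_continuous.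
Qed.


Section Prod.
Variables (R : realType) (d : nat).
Local Notation P := ('rV[R]_d * 'rV[R]_d)%type.

Lemma open_meas2 (U : set P) : open U -> measurable (U : set (Borel P)).
Proof. by move=> oU; apply: sub_sigma_algebra. Qed.

Lemma meas_lt2 (f : P -> R) (c : R) :
  continuous f -> measurable ([set x | f x < c] : set (Borel P)).
Proof.
move=> cf; apply: open_meas2.
have -> : [set x | f x < c] = f @^-1` [set y | y < c] by [].
by move/continuousP : cf; apply; exact: open_lt.
Qed.

Lemma meas_ge2 (f : P -> R) (c : R) :
  continuous f -> measurable ([set x | c <= f x] : set (Borel P)).
Proof.
move=> cf.
have -> : [set x | c <= f x] = ~` [set x | f x < c].
  apply/seteqP; split => x /=; first by rewrite leNgt => /negP.
  by move/negP; rewrite -leNgt.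
by apply: measurableC; exact: meas_lt2.
Qed.

Lemma null_cover2 (m : Mplus R P)
  (B Q : set P) : compact B -> Q `<=` B -> measurable (Q : set (Borel P)) ->
  (forall x, B x -> ~ @msupp R _ (Borel P) (@open P) m x) -> m Q = 0%E.
Proof.
move=> cB QB mQ Hn.
have H : forall x : P, exists U : set P, [/\ open U, m U = 0%E & (B x -> U x)].
  move=> x; have [Bx|nBx] := pselect (B x); last first.
    by exists set0; split => //; exact: open0.
  have := Hn x Bx; rewrite /msupp /= => /existsNP [U] /not_implyP [oU] /not_implyP [Ux nlt].
  exists U; split => // [].
  apply/eqP; rewrite eq_le measure_ge0 andbT.
  by rewrite leNgt; apply/negP => h; apply: nlt.
have [U HU] := choice H.
move: cB; rewrite (@compact_cover ((P : normedModType R) : ptopologicalType)) => /(_ P B U).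
case.
- by move=> i _; case: (HU i).
- by move=> x Bx; exists x => //; case: (HU x) => _ _; apply.
move=> D' _ cov.
apply/eqP; rewrite eq_le measure_ge0 andbT.
have h := @content_sub_fsum _ _ _ m P _ Q U (finite_fset D').
rewrite (le_trans (h _ mQ _)) //.
- by move=> i _; apply: open_meas2; case: (HU i).
- by move=> x /QB /cov.
rewrite fsbig1 // => i _; by case: (HU i).
Qed.
End Prod.

Lemma meas_hcube2 (R : realType) d (z w : 'rV[R]_d) h h' :
  measurable (hcube z h `*` hcube w h' : set (Borel ('rV[R]_d * 'rV[R]_d)%type)).
Proof.
have -> : hcube z h `*` hcube w h' = \bigcap_(j in [set: 'I_d])
   (([set p : ('rV[R]_d * 'rV[R]_d)%type | z ord0 j <= p.1 ord0 j] `&` [set p : ('rV[R]_d * 'rV[R]_d)%type | p.1 ord0 j < z ord0 j + h])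
   `&` ([set p : ('rV[R]_d * 'rV[R]_d)%type | w ord0 j <= p.2 ord0 j] `&` [set p : ('rV[R]_d * 'rV[R]_d)%type | p.2 ord0 j < w ord0 j + h'])).
  apply/seteqP; split => p /=.
    by move=> [H1 H2] j _; have /andP[? ?] := H1 j; have /andP[? ?] := H2 j.
  by move=> H; split => j; have [[a b] [c e]] := H j I; apply/andP.
apply: fin_bigcap_measurable; first exact: finite_finset.
move=> j _; apply: measurableI; apply: measurableI.
- exact (meas_ge2 R d (fun p : ('rV[R]_d * 'rV[R]_d)%type => p.1 ord0 j) _ (coord1_cont R d j)).
- exact (meas_lt2 R d (fun p : ('rV[R]_d * 'rV[R]_d)%type => p.1 ord0 j) _ (coord1_cont R d j)).
- exact (meas_ge2 R d (fun p : ('rV[R]_d * 'rV[R]_d)%type => p.2 ord0 j) _ (coord2_cont R d j)).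
- exact (meas_lt2 R d (fun p : ('rV[R]_d * 'rV[R]_d)%type => p.2 ord0 j) _ (coord2_cont R d j)).
Qed.

Definition cbox (R : realType) d (z : 'rV[R]_d) (h : R) : set 'rV[R]_d :=
  [set y | forall j, z ord0 j <= y ord0 j <= z ord0 j + h].
Arguments cbox {R d}.

Lemma cbox_compact (R : realType) d (z : 'rV[R]_d) h : compact (cbox z h).
Proof.
have -> : cbox z h = [set v : 'rV[R]_d | forall i,
    `[z ord0 i, z ord0 i + h]%classic (v ord0 i)].
  by apply/seteqP; split => v /= H i; move: (H i); rewrite /= in_itv.
apply: (@rV_compact R d (fun i => `[z ord0 i, z ord0 i + h]%classic)) => i.
exact: segment_compact.
Qed.

Lemma hcube_cbox (R : realType) d (z : 'rV[R]_d) h : hcube z h `<=` cbox z h.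
Proof. by move=> y H j; have /andP[a b] := H j; rewrite a ltW. Qed.

Definition bbox (R : realType) d (B : R) : set 'rV[R]_d :=
  [set y | forall j, `|y ord0 j| <= B].
Arguments bbox {R} d B.

Lemma bbox_compact (R : realType) d (B : R) : compact (bbox d B).
Proof.
have -> : bbox d B = [set v : 'rV[R]_d | forall i, `[- B, B]%classic (v ord0 i)].
  by apply/seteqP; split => v /= H i; move: (H i); rewrite /= in_itv /= ler_norml.
apply: (@rV_compact R d (fun i => `[- B, B]%classic)) => i.
exact: segment_compact.
Qed.

Lemma supp_atoms (R : realType) d (m : Mplus R 'rV[R]_d) (S : set 'rV[R]_d) :
  finite_set S ->
  (forall A : set (Borel 'rV[R]_d), measurable A -> (forall y, S y -> ~ A y) -> m A = 0%E) ->
  supp1 m `<=` S.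
Proof.
move=> fS Hm y Hy; apply: contrapT => nSy.
have oU : open (~` S).
  apply: closed_openC; apply: compact_closed; first exact: norm_hausdorff.
  exact: finite_compact.
have := Hy _ oU nSy.
by rewrite (Hm _ (open_meas _ _ oU)) ?ltxx // => z Sz; apply.
Qed.

Lemma coord_le_enorm (R : realType) d (y : 'rV[R]_d) j : `|y ord0 j| <= enorm y.
Proof.
rewrite /enorm -sqrtr_sqr ler_sqrt; last by rewrite sumr_ge0 // => i _; rewrite sqr_ge0.
by rewrite (bigD1 j) //= lerDl sumr_ge0 // => i _; rewrite sqr_ge0.
Qed.

Lemma sum_sq_le (R : realType) (I : Type) (r : seq I) (f : I -> R) :
  (forall i, 0 <= f i) -> \sum_(i <- r) f i ^+ 2 <= (\sum_(i <- r) f i) ^+ 2.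
Proof.
move=> f0; elim: r => [|a r IH]; first by rewrite !big_nil expr0n.
rewrite !big_cons.
have S0 : 0 <= \sum_(i <- r) f i by rewrite sumr_ge0.
have := f0 a; nra.
Qed.

Lemma enorm_le_sum (R : realType) d (y : 'rV[R]_d) : enorm y <= \sum_j `|y ord0 j|.
Proof.
have S0 : 0 <= \sum_j `|y ord0 j| by rewrite sumr_ge0.
rewrite /enorm -(ger0_norm S0) -sqrtr_sqr ler_sqrt; last by rewrite sqr_ge0.
apply: (le_trans _ (sum_sq_le _ _ _ (fun j : 'I_d => `|y ord0 j|) (fun j => normr_ge0 _))).
by apply: ler_sum => i _; rewrite real_normK // num_real.
Qed.

Lemma enorm_le_bnd (R : realType) d (y : 'rV[R]_d) (r : R) :
  (forall j, `|y ord0 j| <= r) -> enorm y <= d%:R * r.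
Proof.
move=> H; apply: le_trans (enorm_le_sum _ _ y) _.
apply: le_trans (ler_sum _ (fun j _ => H j)) _.
by rewrite sumr_const card_ord mulr_natl.
Qed.

Lemma enorm_ge0 (R : realType) d (y : 'rV[R]_d) : 0 <= enorm y.
Proof. exact: sqrtr_ge0. Qed.

Lemma supp2_fst (R : realType) d (mu : Mplus R 'rV[R]_d)
  (W : Mplus R ('rV[R]_d * 'rV[R]_d)%type) :
  (forall A : set (Borel 'rV[R]_d), measurable A -> W (A `*` setT) = mu A) ->
  forall p, supp2 W p -> supp1 mu p.1.
Proof.
move=> HW p Hp U oU Up.
rewrite -HW; last exact: open_meas.
apply: Hp => //.
have -> : (U `*` setT : set ('rV[R]_d * 'rV[R]_d)) = fst @^-1` U.
  by apply/funext => q; apply/propext; split => [[]|] //.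
by move/continuousP: (@fst_cont 'rV[R]_d 'rV[R]_d); apply.
Qed.

Lemma V1_bound (R : realType) d (W : Mplus R ('rV[R]_d * 'rV[R]_d)%type) (C_S r : R) :
  (ereal_sup [set (enorm p.2)%:E | p in supp2 W]
       <= C_S%:E * (1%:E + ereal_sup [set (enorm p.1)%:E | p in supp2 W]))%E ->
  (forall p, supp2 W p -> enorm p.1 <= r) ->
  forall p, supp2 W p -> enorm p.2 <= Num.max C_S 0 * (1 + r).
Proof.
move=> H1 Hr p Hp.
set s := ereal_sup [set (enorm p.1)%:E | p in supp2 W].
have s_ge : ((enorm p.1)%:E <= s)%E by apply: ereal_sup_ubound; exists p.
have s_le : (s <= r%:E)%E by apply: ge_ereal_sup => _ [q Hq <-]; rewrite lee_fin; exact: Hr.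
have s_fin : s \is a fin_num.
  by apply/fin_numPlt; rewrite (lt_le_trans _ s_ge) ?ltNyr // (le_lt_trans s_le) ?ltry.
have e : s = (fine s)%:E by rewrite fineK.
have fs0 : 0 <= fine s by rewrite -lee_fin -e (le_trans _ s_ge) // lee_fin enorm_ge0.
have fsr : fine s <= r by rewrite -lee_fin -e.
have h2 : ((enorm p.2)%:E <= ereal_sup [set (enorm p.2)%:E | p in supp2 W])%E.
  by apply: ereal_sup_ubound; exists p.
have := le_trans h2 H1; rewrite -/s e -EFinD -EFinM lee_fin => h3.
have m1 : C_S <= Num.max C_S 0 by rewrite le_max lexx.
have m2 : 0 <= Num.max C_S 0 by rewrite le_max lexx orbT.
apply: le_trans h3 _.
set M := Num.max C_S 0 in m1 m2 *.
nra.
Qed.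

Lemma cube_pt1 (R : realType) d (m : Mplus R 'rV[R]_d) (z : 'rV[R]_d) h :
  fine (m (hcube z h)) != 0 -> exists y, supp1 m y /\ cbox z h y.
Proof.
move=> H; apply: contrapT => nE; move: H; apply/negP; rewrite negbK.
rewrite (null_cover _ _ m (cbox z h)) //.
- exact: cbox_compact.
- exact: hcube_cbox.
- exact: meas_hcube.
- by move=> x Bx Sx; apply: nE; exists x.
Qed.

Lemma cube_pt2 (R : realType) d (W : Mplus R ('rV[R]_d * 'rV[R]_d)%type)
  (z w : 'rV[R]_d) h h' :
  fine (W (hcube z h `*` hcube w h')) != 0 ->
  exists p, [/\ supp2 W p, cbox z h p.1 & cbox w h' p.2].
Proof.
move=> H; apply: contrapT => nE; move: H; apply/negP; rewrite negbK.
rewrite (null_cover2 _ _ W (cbox z h `*` cbox w h')) //.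
- apply: compact_setX; exact: cbox_compact.
- by move=> p [/hcube_cbox a /hcube_cbox b].
- exact: meas_hcube2.
- by move=> x [b1 b2] Sx; apply: nE; exists x.
Qed.

Lemma cbox_coord (R : realType) d (z : 'rV[R]_d) h y j :
  0 <= h -> cbox z h y -> `|z ord0 j| <= `|y ord0 j| + h.
Proof.
move=> h0 /(_ j) /andP[a b].
have : `|z ord0 j - y ord0 j| <= h by rewrite ler_norml; apply/andP; split; lra.
have := ler_normD (z ord0 j - y ord0 j) (y ord0 j); rewrite subrK; lra.
Qed.

Section Scheme.
Variables (R : realType) (d : nat)
  (V : Mplus R 'rV[R]_d -> Mplus R ('rV[R]_d * 'rV[R]_d)%type)
  (s : Mplus R 'rV[R]_d -> Mplus R 'rV[R]_d)
  (c : 'rV[R]_d -> Mplus R 'rV[R]_d -> R)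
  (mu0 : Mplus R 'rV[R]_d) (N : nat) (mu : nat -> Mplus R 'rV[R]_d).
Hypothesis hs : lattice_scheme V s c mu0 N mu.
Local Notation KX := {ffun 'I_d -> 'I_(2 * N ^ 3).+1}.
Local Notation KV := {ffun 'I_d -> 'I_(2 * N ^ 2).+1}.

Lemma supp_mu0 : supp1 (mu 0%N) `<=`
  [set xpt R k | k in [set k : KX | mx mu0 k != 0]].
Proof.
apply: supp_atoms; first exact/finite_image/finite_finset.
move=> A mA HA; rewrite (hs.1 A mA); congr (_%:E).
apply: big1 => k _.
have [->|nz] := eqVneq (mx mu0 k) 0; first by rewrite mul0r.
by rewrite indicE memNset ?mulr0 //; apply: HA; exists k.
Qed.

Lemma supp_muS l : supp1 (mu l.+1) `<=`
  [set xpt R k | k in [set k : KX | mx (s (mu l)) k != 0]] `|`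
  [set xpt R kk.1 + (1 / N%:R) *: vpt R kk.2 | kk in [set kk : (KX * KV)%type | mv (V (mu l)) kk.1 kk.2 != 0]].
Proof.
apply: supp_atoms.
  by rewrite finite_setU; split; apply/finite_image/finite_finset.
move=> A mA HA; rewrite (hs.2 l A mA); congr (_%:E).
rewrite big1 ?mulr0 ?add0r; last first.
  move=> k _.
  have [->|nz] := eqVneq (mx (s (mu l)) k) 0; first by rewrite mul0r.
  by rewrite indicE memNset ?mulr0 //; apply: HA; left; exists k.
apply: big1 => k _; apply: big1 => k' _.
have [->|nz] := eqVneq (mv (V (mu l)) k k') 0; first by rewrite !mul0r.
by rewrite indicE memNset ?mulr0 //; apply: HA; right; exists (k, k').
Qed.
End Scheme.

Lemma rowDZ (R : realType) d (u v : 'rV[R]_d) (t : R) j :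
  (u + t *: v) ord0 j = u ord0 j + t * v ord0 j.
Proof. by rewrite !mxE. Qed.

Lemma num_facts (R : realType) (N : nat) : (0 < N)%N ->
  [/\ 0 < 1 / N%:R :> R, 1 / N%:R <= 1 :> R, 0 <= 1 / (N ^ 2)%:R :> R
    & 1 / (N ^ 2)%:R <= 1 / N%:R :> R].
Proof.
move=> N0.
have N1 : 1 <= N%:R :> R by rewrite ler1n.
have Np : 0 < N%:R :> R by rewrite ltr0n.
have e : (N ^ 2)%:R = N%:R * N%:R :> R by rewrite natrX expr2.
split.
- by rewrite divr_gt0.
- by rewrite ler_pdivrMr // mul1r.
- by rewrite divr_ge0 // ler0n.
- rewrite e !mul1r lef_pV2 ?posrE ?mulr_gt0 //.
  by rewrite ler_peMr // ltW.
Qed.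

Theorem corollary4p5 (R : realType) (d : nat)
  (V : Mplus R 'rV[R]_d -> Mplus R ('rV[R]_d * 'rV[R]_d)%type)
  (s : Mplus R 'rV[R]_d -> Mplus R 'rV[R]_d)
  (c : 'rV[R]_d -> Mplus R 'rV[R]_d -> R)
  (C_S : R) (C_F : R -> R) (L Rs C_b C_L : R)
  (* (V): pi_1 # V[mu] = mu *)
  (HV : forall (mu : Mplus R 'rV[R]_d) (A : set (Borel 'rV[R]_d)),
      measurable A -> V mu (A `*` setT) = mu A)
  (* (V1) *)
  (HV1 : forall mu : Mplus R 'rV[R]_d,
      (ereal_sup [set (enorm p.2)%:E | p in supp2 (V mu)]
       <= C_S%:E * (1%:E + ereal_sup [set (enorm p.1)%:E | p in supp2 (V mu)]))%E)
  (* (V2) *)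
  (HV2 : forall R' : R, 0 < R' -> forall mu nu : Mplus R 'rV[R]_d,
      supp1 mu `<=` eball0 R' -> supp1 nu `<=` eball0 R' ->
      (bl2 (V mu) (V nu) <= (C_F R')%:E * bl1 mu nu)%E)
  (* (S1), (S2) *)
  (HS1 : forall mu nu : Mplus R 'rV[R]_d,
      (bl1 (s mu) (s nu) <= L%:E * bl1 mu nu)%E)
  (HS2 : forall mu : Mplus R 'rV[R]_d, supp1 (s mu) `<=` eball0 Rs)
  (* (C1), (C2) *)
  (HC1 : forall x mu, `|c x mu| <= C_b)
  (HC2 : forall x y mu nu,
      ((`|c x mu - c y nu|)%:E
       <= C_L%:E * ((enorm (x - y))%:E + bl1 mu nu))%E)
  (T : R) (hT : 0 < T)
  (mu0 : Mplus R 'rV[R]_d) (hmu0 : compact (supp1 mu0))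
  (muN : nat -> nat -> Mplus R 'rV[R]_d)
  (hscheme : forall N : nat, (0 < N)%N -> lattice_scheme V s c mu0 N (muN N)) :
  exists K : set ('rV[R]_d * 'rV[R]_d)%type, compact K /\
    exists N0 : nat, forall N : nat, (N0 <= N)%N -> (0 < N)%N ->
      forall l : nat, l%:R / N%:R <= T ->
        supp2 (V (muN N l)) `<=` K.
Proof.
have [M0 [_ HM0]] := compact_bounded hmu0.
have HM0' : forall y, supp1 mu0 y -> forall j, `|y ord0 j| <= M0 + 1.
  move=> y Sy j; apply: le_trans (coord_le_norm _ _ y j) _.
  by apply: (HM0 (M0 + 1)) => //; rewrite ltrDl.
set Cp := Num.max C_S 0.
have Cp0 : 0 <= Cp by rewrite le_max lexx orbT.
set cc := 2 + Cp + Cp * d%:R.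
have cc0 : 0 <= cc by rewrite /cc addr_ge0 ?mulr_ge0 ?addr_ge0.
set Mx := Num.max 1 (Num.max (Rs + 2) (M0 + 3)).
have Mx1 : 1 <= Mx by rewrite le_max lexx.
have MxRs : Rs + 2 <= Mx by rewrite !le_max lexx orbT.
have MxM0 : M0 + 3 <= Mx by rewrite !le_max lexx !orbT.
have claim : forall N, (0 < N)%N -> forall l y, supp1 (muN N l) y ->
    forall j, `|y ord0 j| + 1 <= Mx * (1 + cc * (1 / N%:R)) ^+ l.
  move=> N N0.
  have [t0 t1 h0 ht] := num_facts R N N0.
  set t := 1 / N%:R in t0 t1 ht *.
  set h := 1 / (N ^ 2)%:R in h0 ht.
  have hs := hscheme N N0.
  have ge1 : forall l, 1 <= (1 + cc * t) ^+ l.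
    by move=> l; apply: exprn_ege1; rewrite lerDl mulr_ge0 // ltW.
  elim => [|l IH] y Hy j.
  - have [k /= nz <-] := supp_mu0 _ _ _ _ _ _ _ _ hs _ Hy.
    have [z [Sz Bz]] := cube_pt1 _ _ mu0 _ _ nz.
    have := cbox_coord _ _ _ _ _ j h0 Bz.
    have := HM0' z Sz j.
    rewrite expr0 mulr1; lra.
  - set rho := Mx * (1 + cc * t) ^+ l.
    have rho1 : 1 <= rho by have := ge1 l; rewrite /rho; nra.
    have ctn : 0 <= cc * t by rewrite mulr_ge0 // ltW.
    have eS : Mx * (1 + cc * t) ^+ l.+1 = rho * (1 + cc * t) by rewrite exprSr mulrA.
    rewrite eS.
    have rho_le : rho <= rho * (1 + cc * t) by rewrite ler_peMr ?lerDl //; lra.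
    case: (supp_muS _ _ _ _ _ _ _ _ hs _ _ Hy) => [[k /= nz <-] | [[k k'] /= nz <-]].
    + have [z [Sz Bz]] := cube_pt1 _ _ _ _ _ nz.
      have := cbox_coord _ _ _ _ _ j h0 Bz.
      have := coord_le_enorm _ _ z j.
      have := HS2 (muN N l) z Sz; rewrite /eball0 /= => zR.
      have : Mx <= rho by rewrite /rho ler_peMr ?ge1 //; lra.
      lra.
    + have [p [Sp B1 B2]] := cube_pt2 _ _ _ _ _ _ _ nz.
      have Hx : forall p', supp2 (V (muN N l)) p' -> enorm p'.1 <= d%:R * rho.
        move=> p' Sp'; apply: enorm_le_bnd => j'.
        have := IH _ (supp2_fst _ _ _ _ (HV (muN N l)) _ Sp') j'; rewrite -/rho; lra.
      have Hw := V1_bound _ _ _ C_S (d%:R * rho) (HV1 (muN N l)) Hx p Sp.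
      rewrite -/Cp in Hw.
      have Hp2 := coord_le_enorm _ _ p.2 j.
      have Hp1 := IH _ (supp2_fst _ _ _ _ (HV (muN N l)) _ Sp) j.
      rewrite -/rho in Hp1.
      have Hv := cbox_coord _ _ _ _ _ j (ltW t0) B2.
      have Hxk := cbox_coord _ _ _ _ _ j h0 B1.
      rewrite rowDZ.
      have Ny := ler_normD (xpt R k ord0 j) (t * vpt R k' ord0 j).
      rewrite normrM (gtr0_norm t0) in Ny.
      set a := `|xpt R k ord0 j| in Hxk Ny *.
      set b := `|vpt R k' ord0 j| in Hv Ny *.
      have hb : b <= Cp * (1 + d%:R * rho) + 1 by lra.
      have tb : t * b <= t * (Cp * (1 + d%:R * rho) + 1) by rewrite ler_pM2l.
      have d0 : 0 <= d%:R :> R by rewrite ler0n.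
      have e1 : rho * (1 + cc * t) = rho + t * (rho * (2 + Cp) + Cp * d%:R * rho).
        by rewrite /cc; ring.
      rewrite e1.
      have : t * (2 + Cp + Cp * (d%:R * rho)) <= t * (rho * (2 + Cp) + Cp * d%:R * rho).
        rewrite ler_pM2l // mulrA lerD2r; nra.
      lra.
set B1 := Mx * expR (cc * T).
set B2 := Cp * (1 + d%:R * B1).
exists (bbox d B1 `*` bbox d B2); split.
  by apply: compact_setX; apply: bbox_compact.
exists 0%N => N _ N0 l hl p Sp.
have [t0 _ _ _] := num_facts R N N0.
have rhoB : Mx * (1 + cc * (1 / N%:R)) ^+ l <= B1.
  rewrite /B1 ler_pM2l; last lra.
  apply: (@le_trans _ _ (expR (cc * (1 / N%:R)) ^+ l)).
    apply: lerXn2r; rewrite ?nnegrE ?expR_ge0 //.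
      by rewrite addr_ge0 // mulr_ge0 // ltW.
    exact: expR_ge1Dx.
  rewrite -expRM_natl ler_expR.
  have -> : l%:R * (cc * (1 / N%:R)) = cc * (l%:R / N%:R) by rewrite mul1r mulrCA.
  by apply: ler_wpM2l.
set rho := Mx * (1 + cc * (1 / N%:R)) ^+ l in rhoB.
have Hx : forall p', supp2 (V (muN N l)) p' -> enorm p'.1 <= d%:R * rho.
  move=> p' Sp'; apply: enorm_le_bnd => j'.
  have := claim N N0 l _ (supp2_fst _ _ _ _ (HV (muN N l)) _ Sp') j'; rewrite -/rho; lra.
have Hw := V1_bound _ _ _ C_S (d%:R * rho) (HV1 (muN N l)) Hx p Sp.
rewrite -/Cp in Hw.
split => j.
  have := claim N N0 l _ (supp2_fst _ _ _ _ (HV (muN N l)) _ Sp) j; rewrite -/rho; lra.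
have Hp2 := coord_le_enorm _ _ p.2 j.
apply: (le_trans Hp2); apply: (le_trans Hw).
rewrite /B2; apply: ler_wpM2l => //; rewrite lerD2l; apply: ler_wpM2l => //.
Qed.
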